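(* The permutation representation $\alpha_{H_n^n}$ of $S_n\times S_n$ is isomorphic to the regular representation of $S_n\times S_n$.
   Context: Permutations are composed as functions, and $\pi\in S_n$ is identified with the $n\times n$ permutation matrix whose $(i,j)$ entry is $1$ iff $i=\pi(j)$. For $A\in GL_n(\mathbb{Z}_2)$ let $\eta(A)$ (resp. $\theta(A)$) be the partition obtained by sorting the row sums (resp. column sums) of $A$, computed as integers, in weakly decreasing order. $H_n^n=\{A\in GL_n(\mathbb{Z}_2)\mid \eta(A)=\theta(A)=(n,n-1,\dots,2,1)\}$. The group $S_n\times S_n$ acts on $H_n^n$ by $(\pi,\sigma)\bullet A=\pi A\sigma^{-1}$, and $\alpha_{H_n^n}$ denotes the associated complex permutation representation (on the vector space with basis $H_n^n$). *)

(* Defs.v *)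
From HB Require Import structures.
From mathcomp Require Import all_boot all_order all_algebra all_fingroup all_solvable all_field all_character.
Set Implicit Arguments. Unset Strict Implicit. Unset Printing Implicit Defensive.
Import GRing.Theory.
Local Open Scope ring_scope.

Definition pmx n (s : 'S_n) : 'M['F_2]_n := \matrix_(i, j) (i == s j)%:R.

Definition act n (g : 'S_n * 'S_n) (A : 'M['F_2]_n) : 'M['F_2]_n :=
  pmx g.1 *m A *m pmx (g.2^-1)%g.

(* row / column sums computed as integers (entries are 0 or 1) *)
Definition rowsum n (A : 'M['F_2]_n) (i : 'I_n) : nat := (\sum_(j < n) (A i j != 0%R : nat))%N.
Definition colsum n (A : 'M['F_2]_n) (j : 'I_n) : nat := (\sum_(i < n) (A i j != 0%R : nat))%N.

Definition eta n (A : 'M['F_2]_n) : seq nat := sort geq [seq rowsum A i | i <- enum 'I_n].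
Definition theta n (A : 'M['F_2]_n) : seq nat := sort geq [seq colsum A j | j <- enum 'I_n].

Definition staircase n : seq nat := rev (iota 1 n).

Definition Hset n : {set 'M['F_2]_n} :=
  [set A | (A \in unitmx) && (eta A == staircase n) && (theta A == staircase n)].

(* permutation matrices of the action on the basis H_n^n (row-vector convention
   of MathComp representations) *)
Definition Hperm_mx n (g : 'S_n * 'S_n) : 'M[algC]_#|Hset n| :=
  \matrix_(k, l) (enum_val l == act g (enum_val k))%:R.


Lemma pmxM n (s t : 'S_n) : pmx (s * t)%g = pmx t *m pmx s.
Proof.
apply/matrixP=> i j; rewrite !mxE (bigD1 (s j)) //= !mxE eqxx mulr1 permM.
rewrite big1 ?addr0 // => k /negbTE nk; rewrite !mxE eq_sym nk mulr0 //.
Qed.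

Lemma pmx1 n : pmx (1%g : 'S_n) = 1%:M.
Proof. by apply/matrixP=> i j; rewrite !mxE perm1. Qed.

Lemma pmx_unit n (s : 'S_n) : pmx s \in unitmx.
Proof.
have : pmx s *m pmx (s^-1)%g = 1%:M by rewrite -pmxM mulVg pmx1.
by case/mulmx1_unit.
Qed.

Lemma actE n g (A : 'M['F_2]_n) i j :
  act g A i j = A (g.1^-1 i)%g (g.2^-1 j)%g.
Proof.
rewrite /act mxE (bigD1 (g.2^-1 j)%g) //= big1 ?addr0; last first.
  move=> k nk; rewrite [pmx _ k j]mxE.
  have -> : (k == (g.2^-1)%g j) = false by apply/negbTE.
  by rewrite mulr0.
rewrite [pmx _ _ j]mxE eqxx mulr1 mxE (bigD1 (g.1^-1 i)%g) //= big1 ?addr0; last first.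
  by move=> k /negbTE nk; rewrite mxE -{1}(permKV g.1 i) (inj_eq perm_inj) eq_sym nk mul0r.
by rewrite mxE permKV eqxx mul1r.
Qed.

Lemma act1 n (A : 'M['F_2]_n) : act 1%g A = A.
Proof. by apply/matrixP=> i j; rewrite actE /= invg1 !perm1. Qed.

Lemma actM n (x y : 'S_n * 'S_n) A : act (x * y)%g A = act y (act x A).
Proof. by apply/matrixP=> i j; rewrite !actE /= !invMg !permM. Qed.

Lemma perm_map_enum n (p : 'S_n) (f : 'I_n -> nat) :
  perm_eq [seq f (p i) | i <- enum 'I_n] [seq f i | i <- enum 'I_n].
Proof.
rewrite (map_comp f p); apply: perm_map; apply: uniq_perm.
- by rewrite map_inj_uniq ?enum_uniq //; apply: perm_inj.
- exact: enum_uniq.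
move=> x; rewrite mem_enum; apply/mapP; exists (p^-1 x)%g; first by rewrite mem_enum.
by rewrite permKV.
Qed.

Lemma sort_perm_geq (s1 s2 : seq nat) : perm_eq s1 s2 -> sort geq s1 = sort geq s2.
Proof.
move=> h; apply/perm_sortP => //.
- by move=> a b; apply: leq_total.
- by move=> a b c h1 h2; apply: leq_trans h2 h1.
- by move=> a b hab; apply: anti_leq; rewrite andbC.
Qed.

Lemma act_Hset n g A : A \in Hset n -> act g A \in Hset n.
Proof.
rewrite !inE => /andP[/andP[uA eA] tA].
have -> : eta (act g A) = eta A.
  rewrite /eta; apply: sort_perm_geq.
  have -> : [seq rowsum (act g A) i | i <- enum 'I_n] =
            [seq rowsum A (g.1^-1 i)%g | i <- enum 'I_n].
    apply: eq_map => i; rewrite /rowsum (reindex_inj (@perm_inj _ g.2)) /=.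
    by apply: eq_bigr => j _; rewrite actE permK.
  exact: (perm_map_enum _ (rowsum A)).
have -> : theta (act g A) = theta A.
  rewrite /theta; apply: sort_perm_geq.
  have -> : [seq colsum (act g A) i | i <- enum 'I_n] =
            [seq colsum A (g.2^-1 i)%g | i <- enum 'I_n].
    apply: eq_map => j; rewrite /colsum (reindex_inj (@perm_inj _ g.1)) /=.
    by apply: eq_bigr => i _; rewrite actE permK.
  exact: (perm_map_enum _ (colsum A)).
by rewrite eA tA !andbT /act !unitmx_mul uA !pmx_unit.
Qed.

Lemma Hperm_mx_repr n : mx_repr [set: 'S_n * 'S_n] (@Hperm_mx n).
Proof.
split.
  apply/matrixP=> k l; rewrite !mxE act1 (inj_eq enum_val_inj) eq_sym //.
move=> x y _ _; apply/matrixP=> k l; rewrite !mxE.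
have Hk : act x (enum_val k) \in Hset n by apply: act_Hset; apply: enum_valP.
pose m := enum_rank_in Hk (act x (enum_val k)).
have em : enum_val m = act x (enum_val k) by rewrite enum_rankK_in.
rewrite (bigD1 m) //= big1 ?addr0; last first.
  move=> m' nm; rewrite !mxE; case: eqP => [e|]; last by rewrite mul0r.
  by case/eqP: nm; apply: enum_val_inj; rewrite e em.
by rewrite !mxE em eqxx mul1r actM.
Qed.

Definition Hperm_repr n : mx_representation algC [set: 'S_n * 'S_n] #|Hset n| :=
  MxRepresentation (@Hperm_mx_repr n).

(* Main.v *)
Require Import Defs.
From mathcomp Require Import all_boot all_order all_algebra all_fingroup all_solvable all_field all_character.
From mathcomp Require Import zify.
Set Implicit Arguments. Unset Strict Implicit. Unset Printing Implicit Defensive.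
Import GRing.Theory.

Lemma F2_01 (x : 'F_2) : x = ((((x != 0%R) : bool)%:R)%R).
Proof. by case: x => [[|[|m]] //= Hm]; apply/val_inj. Qed.

Lemma boolR_neq0 (b : bool) : (((b%:R)%R : 'F_2) != 0%R) = b.
Proof. by case: b. Qed.

Lemma card_lt n m : m <= n -> #|[set j : 'I_n | j < m]| = m.
Proof.
move=> le_mn.
have -> : [set j : 'I_n | j < m] = widen_ord le_mn @: [set: 'I_m].
  apply/setP=> j; rewrite inE; apply/idP/imsetP => [jm|[k _ ->]] /=; last exact: ltn_ord.
  by exists (Ordinal jm); [rewrite inE | apply: val_inj].
by rewrite (card_imset (f := widen_ord le_mn) _ (fun a b e => val_inj (congr1 val e : val a = val b))) cardsT card_ord.
Qed.

Lemma rowsumE n (A : 'M['F_2]_n) i : rowsum A i = #|[set j | A i j != 0%R]|.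
Proof. by rewrite /rowsum cardsE -sum1_card [RHS]big_mkcond /=; apply: eq_bigr => j _; rewrite unfold_in; case: (_ != _). Qed.

Lemma colsumE n (A : 'M['F_2]_n) j : colsum A j = #|[set i | A i j != 0%R]|.
Proof. by rewrite /colsum cardsE -sum1_card [RHS]big_mkcond /=; apply: eq_bigr => i _; rewrite unfold_in; case: (_ != _). Qed.

Lemma rowsum_act n g (A : 'M['F_2]_n) i : rowsum (Defs.act g A) i = rowsum A (g.1^-1 i)%g.
Proof.
rewrite /rowsum (reindex_inj (@perm_inj _ g.2)) /=.
by apply: eq_bigr => j _; rewrite actE permK.
Qed.

Lemma colsum_act n g (A : 'M['F_2]_n) j : colsum (Defs.act g A) j = colsum A (g.2^-1 j)%g.
Proof.
rewrite /colsum (reindex_inj (@perm_inj _ g.1)) /=.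
by apply: eq_bigr => i _; rewrite actE permK.
Qed.
Lemma stair_uniq n (B : 'M['F_2]_n) :
  (forall i, rowsum B i = n - i) -> (forall j, colsum B j = n - j) ->
  forall i j : 'I_n, (B i j != 0%R) = (i + j < n).
Proof.
move=> hr hc.
suff H : forall k, k <= n -> forall (i j : 'I_n), (i < k) || (n - k <= j) ->
    (B i j != 0%R) = (i + j < n).
  by move=> i j; apply: (H n) => //; rewrite ltn_ord.
elim=> [|k IH] lekn i j.
  by rewrite ltn0 subn0 leqNgt ltn_ord.
have ltkn : k < n := lekn.
have {}IH := IH (ltnW ltkn).
have hrow : forall j : 'I_n, (B (Ordinal ltkn) j != 0%R) = (k + j < n).
  have sub : [set j | B (Ordinal ltkn) j != 0%R] \subset [set j : 'I_n | j < n - k].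
    apply/subsetP=> j'; rewrite !inE => nz; rewrite ltnNge; apply/negP => hj.
    move: nz; rewrite IH /=; last by rewrite hj orbT.
    apply/negP; lia.
  have e : [set j | B (Ordinal ltkn) j != 0%R] = [set j : 'I_n | j < n - k].
    by apply/eqP; rewrite eqEcard sub card_lt ?leq_subr // -rowsumE hr /=. 
  by move=> j'; move/setP: e => /(_ j'); rewrite !inE => ->; rewrite ltn_subRL.
have ltc : n - k.+1 < n by lia.
have hcol : forall i : 'I_n, (B i (Ordinal ltc) != 0%R) = (i + (n - k.+1) < n).
  have sub : [set i : 'I_n | i < k.+1] \subset [set i | B i (Ordinal ltc) != 0%R].
    apply/subsetP => i'; rewrite !inE ltnS leq_eqVlt => /orP [/eqP ik| ik].
      have -> : i' = Ordinal ltkn by apply: val_inj.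
      rewrite hrow /=; lia.
    rewrite IH ?ik //=; lia.
  have e : [set i | B i (Ordinal ltc) != 0%R] = [set i : 'I_n | i < k.+1].
    apply/eqP; rewrite eq_sym eqEcard sub card_lt // -colsumE hc /=; lia.
  move=> i'; move/setP: e => /(_ i'); rewrite !inE => ->.
  apply/idP/idP; lia.
move=> /orP [hi|hj].
  move: hi; rewrite ltnS leq_eqVlt => /orP [/eqP ik|ik].
    have -> : i = Ordinal ltkn by apply: val_inj.
    by rewrite hrow.
  by rewrite IH ?ik.
have : (nat_of_ord j == n - k.+1) || (n - k <= j) by lia.
case/orP => [/eqP jc|hj'].
  have -> : j = Ordinal ltc by apply: val_inj.
  by rewrite hcol.
by rewrite IH ?hj' ?orbT.
Qed.

Definition Smx n : 'M['F_2]_n := (\matrix_(i, j) (i + j < n)%N%:R)%R.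

Lemma Smx_rowsum n (i : 'I_n) : rowsum (Smx n) i = n - i.
Proof.
rewrite rowsumE -[RHS](@card_lt n (n - i)) ?leq_subr //; apply: eq_card => j.
by rewrite !inE mxE boolR_neq0 ltn_subRL.
Qed.

Lemma Smx_colsum n (j : 'I_n) : colsum (Smx n) j = n - j.
Proof.
rewrite colsumE -[RHS](@card_lt n (n - j)) ?leq_subr //; apply: eq_card => i.
by rewrite !inE mxE boolR_neq0 ltn_subRL addnC.
Qed.

Lemma stair_eq n (B : 'M['F_2]_n) :
  (forall i, rowsum B i = n - i) -> (forall j, colsum B j = n - j) -> B = Smx n.
Proof.
move=> hr hc; apply/matrixP => i j.
by rewrite mxE (F2_01 (B i j)) (stair_uniq hr hc).
Qed.

Lemma seq_stair n : [seq n - val i | i <- enum 'I_n] = staircase n.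
Proof.
rewrite (map_comp (fun m => n - m) val) val_enum_ord /staircase.
apply: (@eq_from_nth _ 0); first by rewrite size_map size_rev !size_iota.
rewrite size_map size_iota => i lt_in.
rewrite (nth_map 0) ?size_iota // nth_rev ?size_iota // !nth_iota //; lia.
Qed.

Lemma sort_stair n : sort geq (staircase n) = staircase n.
Proof.
apply: sorted_sort.
  by move=> a b c h1 h2; apply: leq_trans h2 h1.
by rewrite /staircase rev_sorted; apply: iota_sorted.
Qed.

Lemma Smx_unit n : Smx n \in unitmx.
Proof.
pose T : 'M['F_2]_n := (\matrix_(i, j) (j <= i)%N%:R)%R.
have trT : is_trig_mx T by apply/is_trig_mxP => i j lij; rewrite mxE leqNgt lij.
have uT : T \in unitmx.
  rewrite unitmxE (det_trig trT) big1 ?unitr1 // => i _; by rewrite mxE leqnn.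
pose r := perm (@rev_ord_inj n).
have rV : forall i, (r^-1)%g i = rev_ord i.
  by move=> i; apply: (@perm_inj _ r); rewrite permKV permE rev_ordK.
have -> : Smx n = Defs.act (r, 1%g) T.
  apply/matrixP => i j; rewrite actE /= invg1 perm1 rV !mxE /=.
  have := ltn_ord i; move=> ?; congr (_%:R)%R; congr nat_of_bool; apply/idP/idP => h; lia.
by rewrite /Defs.act /= !unitmx_mul uT !pmx_unit.
Qed.
Lemma Smx_H n : Smx n \in Hset n.
Proof.
rewrite inE Smx_unit /eta /theta.
rewrite (eq_map (@Smx_rowsum n)) (eq_map (@Smx_colsum n)) seq_stair sort_stair.
by rewrite eqxx.
Qed.

Lemma norm_perm n (f : 'I_n -> nat) :
  sort geq [seq f i | i <- enum 'I_n] = staircase n ->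
  exists p : 'S_n, forall i, f ((p^-1)%g i) = n - i.
Proof.
move=> e.
have pe : perm_eq [seq f i | i <- enum 'I_n] (iota 1 n).
  by rewrite -(perm_sort geq) e /staircase perm_rev.
have uf : uniq [seq f i | i <- enum 'I_n] by rewrite (perm_uniq pe) iota_uniq.
have finj : injective f by apply/injectiveP; exact: uf.
have frange i : 1 <= f i <= n.
  have : f i \in iota 1 n by rewrite -(perm_mem pe) map_f ?mem_enum.
  by rewrite mem_iota add1n ltnS.
pose q i := insubd i (n - f i) : 'I_n.
have qv i : val (q i) = n - f i.
  rewrite /q val_insubd ifT //; have := frange i; have := ltn_ord i; lia.
have qinj : injective q.
  move=> a b /(congr1 val); rewrite !qv => h; apply: finj.
  have := frange a; have := frange b; lia.
exists (perm qinj) => i.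
set j := ((perm qinj)^-1)%g i.
have <- : q j = i by rewrite -permE permKV.
rewrite qv; have := frange j; lia.
Qed.

Lemma normalize n (A : 'M['F_2]_n) : A \in Hset n -> exists g, Defs.act g A = Smx n.
Proof.
rewrite inE => /andP [/andP [_ /eqP e1] /eqP e2].
have [p hp] := norm_perm e1; have [q hq] := norm_perm e2.
exists (p, q); apply: stair_eq => i.
  by rewrite rowsum_act /= hp.
by rewrite colsum_act /= hq.
Qed.

Lemma stab n (g : 'S_n * 'S_n) : Defs.act g (Smx n) = Smx n -> g = 1%g.
Proof.
case: g => a b e.
have ha : forall i, (a^-1)%g i = i.
  move=> i; have := rowsum_act (a, b) (Smx n) i; rewrite e /= !Smx_rowsum.
  have := ltn_ord i; have := ltn_ord ((a^-1)%g i) => h1 h2 h3.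
  apply: ord_inj; lia.
have hb : forall i, (b^-1)%g i = i.
  move=> i; have := colsum_act (a, b) (Smx n) i; rewrite e /= !Smx_colsum.
  have := ltn_ord i; have := ltn_ord ((b^-1)%g i) => h1 h2 h3.
  apply: ord_inj; lia.
have -> : a = 1%g by apply/permP => i; rewrite perm1 -{1}(ha (a i)) permK.
have -> : b = 1%g by apply/permP => i; rewrite perm1 -{1}(hb (b i)) permK.
by [].
Qed.

Lemma actK n (x : 'S_n * 'S_n) A : Defs.act (x^-1)%g (Defs.act x A) = A.
Proof. by rewrite -Defs.actM mulgV Defs.act1. Qed.

Lemma actKV n (x : 'S_n * 'S_n) A : Defs.act x (Defs.act (x^-1)%g A) = A.
Proof. by rewrite -Defs.actM mulVg Defs.act1. Qed.

Lemma phi_inj n : injective (fun g : 'S_n * 'S_n => Defs.act g (Smx n)).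
Proof.
move=> g h /= e; apply/eqP; rewrite eq_mulgV1; apply/eqP/stab.
by rewrite Defs.actM e -Defs.actM mulgV Defs.act1.
Qed.

Lemma phi_surj n (A : 'M['F_2]_n) : A \in Hset n -> exists g, A = Defs.act g (Smx n).
Proof.
move=> /normalize [g e]; exists (g^-1)%g; by rewrite -e actK.
Qed.

Definition Bmx n : 'M[algC]_(#|Hset n|, #|[set: 'S_n * 'S_n]|) :=
  (\matrix_(k, i) (enum_val k == Defs.act (enum_val i) (Smx n))%:R)%R.
Definition Cmx n : 'M[algC]_(#|[set: 'S_n * 'S_n]|, #|Hset n|) :=
  (\matrix_(i, k) (enum_val k == Defs.act (enum_val i) (Smx n))%:R)%R.

Theorem mainTheorem2 (n : nat) :
  mx_rsim (Hperm_repr n) (regular_repr algC [set: 'S_n * 'S_n]).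
Proof.
apply: (MxReprSim (B := Bmx n)).
- have -> : Hset n = [set Defs.act g (Smx n) | g in [set: 'S_n * 'S_n]].
    apply/setP => A; apply/idP/imsetP => [/phi_surj [g ->]|[g _ ->]].
      by exists g; rewrite ?inE.
    by apply: act_Hset; exact: Smx_H.
  by rewrite (card_imset _ (@phi_inj n)).
- apply/row_freeP; exists (Cmx n); apply/matrixP => k k'; rewrite !mxE.
  have [g eg] := phi_surj (enum_valP k).
  have Gg : g \in [set: 'S_n * 'S_n] by rewrite inE.
  pose i0 := enum_rank_in Gg g.
  have ei0 : enum_val i0 = g by rewrite enum_rankK_in.
  rewrite (bigD1 i0) //= big1 ?addr0; last first.
    move=> i ni; rewrite !mxE; case: (@eqP _ (enum_val k)) => [e|_]; last first.
      by rewrite GRing.mulr0n GRing.mul0r.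
    case/eqP: ni; apply: enum_val_inj; rewrite ei0; apply: (@phi_inj n).
    by rewrite /= -e -eg.
  rewrite !mxE ei0 -eg eqxx (inj_eq enum_val_inj) eq_sym.
  by case: (k == k'); rewrite /= ?GRing.mulr1 ?GRing.mulr0.
move=> x _; apply/matrixP => k i; rewrite !mxE.
have Hk : Defs.act x (enum_val k) \in Hset n by apply: act_Hset; apply: enum_valP.
pose l0 := enum_rank_in Hk (Defs.act x (enum_val k)).
have el0 : enum_val l0 = Defs.act x (enum_val k) by rewrite enum_rankK_in.
rewrite (bigD1 l0) //= big1 ?addr0; last first.
  move=> l nl; rewrite !mxE; case: eqP => [e|]; last by rewrite GRing.mul0r.
  by case/eqP: nl; apply: enum_val_inj; rewrite e el0.
rewrite !mxE el0 eqxx GRing.mul1r.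
set G := [set: 'S_n * 'S_n].
have Gg : (enum_val i * x^-1)%g \in G by rewrite inE.
pose j0 := enum_rank_in Gg (enum_val i * x^-1)%g.
have ej0 : enum_val j0 = (enum_val i * x^-1)%g by rewrite enum_rankK_in.
rewrite (bigD1 j0) //= big1 ?addr0; last first.
  move=> j nj; rewrite !mxE eqxx /=; case: (@eqP _ i) => [ei|_]; last by rewrite GRing.mulr0n GRing.mulr0.
  case/eqP: nj; apply: enum_val_inj.
  by rewrite ej0 ei gring_indexK ?inE // -mulgA mulgV mulg1.
rewrite !mxE ej0 -mulgA mulVg mulg1 gring_valK !eqxx /= GRing.mulr1 Defs.actM.
congr (_%:R)%R; congr nat_of_bool; apply/eqP/eqP => e.
  by rewrite -e actK.
by rewrite e actKV.
Qed.
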